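(* Let $(\mathfrak{Q},\&,e)$ be a unital quantale and $p,q\in\mathfrak{Q}$. Then: (1) $\mathcal{D}\mathfrak{Q}(\bot,q)=\mathcal{D}\mathfrak{Q}(q,\bot)=\{\bot\}$; (2) $\mathcal{D}\mathfrak{Q}(e,e)=\mathfrak{Q}$; (3) $q\in\mathcal{D}\mathfrak{Q}(q,q)$; (4) $\bot\in\mathcal{D}\mathfrak{Q}(p,q)$; (5) $e\in\mathcal{D}\mathfrak{Q}(\top,\top)$ if and only if $\mathfrak{Q}$ is integral. Moreover, (6) $\mathfrak{Q}$ is integral if and only if $\mathcal{D}\mathfrak{Q}(p,q)\subseteq\{u\in\mathfrak{Q}\mid u\le p\wedge q\}$ for all $p,q\in\mathfrak{Q}$; (7) $\mathfrak{Q}$ is divisible if and only if $\mathcal{D}\mathfrak{Q}(p,q)=\{u\in\mathfrak{Q}\mid u\le p\wedge q\}$ for all $p,q\in\mathfrak{Q}$.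
   Context: A unital quantale $(\mathfrak{Q},\&,e)$ is a complete lattice $\mathfrak{Q}$ with an associative binary operation $\&$ having unit $e$ and preserving arbitrary joins in each variable separately; throughout it is assumed non-trivial, i.e. $\bot<e$. The left and right implications $/$ and $\backslash$ are defined by $p\& q\le r\iff p\le r/ q\iff q\le p\backslash r$. $\mathfrak{Q}$ is integral if $e=\top$. $\mathfrak{Q}$ is divisible if whenever $u\le q$ one has $q\&(q\backslash u)=u=(u/ q)\& q$. For $p,q\in\mathfrak{Q}$, $\mathcal{D}\mathfrak{Q}(p,q)=\{u\in\mathfrak{Q}\mid (u/ p)\& p=u=q\&(q\backslash u)\}$ (the elements right-divisible by $p$ and left-divisible by $q$). *)

(* Defs.v *)
Record quantale := Quantale {
  carrier :> Type;
  le : carrier -> carrier -> Prop;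
  le_refl : forall x, le x x;
  le_trans : forall x y z, le x y -> le y z -> le x z;
  le_antisym : forall x y, le x y -> le y x -> x = y;
  sup : (carrier -> Prop) -> carrier;
  sup_ub : forall (S : carrier -> Prop) x, S x -> le x (sup S);
  sup_least : forall (S : carrier -> Prop) y,
      (forall x, S x -> le x y) -> le (sup S) y;
  mul : carrier -> carrier -> carrier;
  unit : carrier;
  mulA : forall x y z, mul x (mul y z) = mul (mul x y) z;
  mul1q : forall x, mul unit x = x;
  mulq1 : forall x, mul x unit = x;
  mul_supl : forall (S : carrier -> Prop) y,
      mul (sup S) y = sup (fun z => exists x, S x /\ z = mul x y);
  mul_supr : forall (S : carrier -> Prop) x,
      mul x (sup S) = sup (fun z => exists y, S y /\ z = mul x y)
}.

Arguments le {q}.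
Arguments sup {q}.
Arguments mul {q}.
Arguments unit {q}.

Section Ops.
Variable Q : quantale.

Definition bot : Q := sup (fun _ => False).
Definition top : Q := sup (fun _ => True).
Definition meet (p q : Q) : Q := sup (fun u => le u p /\ le u q).

(* left implication  r / q : the largest p with p & q <= r,
   so that p & q <= r <-> p <= r / q *)
Definition rimpl (r q : Q) : Q := sup (fun p => le (mul p q) r).
(* right implication p \ r : the largest q with p & q <= r,
   so that p & q <= r <-> q <= p \ r *)
Definition limpl (p r : Q) : Q := sup (fun q => le (mul p q) r).

Definition nontrivial : Prop := le bot unit /\ bot <> unit.

Definition integral : Prop := unit = top.

Definition divisible : Prop :=
  forall u q : Q, le u q ->
    mul q (limpl q u) = u /\ mul (rimpl u q) q = u.

Definition DQ (p q : Q) (u : Q) : Prop :=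
  mul (rimpl u p) p = u /\ mul q (limpl q u) = u.
End Ops.

Arguments bot {Q}.
Arguments top {Q}.
Arguments meet {Q}.
Arguments rimpl {Q}.
Arguments limpl {Q}.
Arguments DQ {Q}.

(* Main.v *)
Require Import Defs.
From Stdlib Require Import Setoid.

Lemma le_bot (Q : quantale) (x : Q) : le bot x.
Proof. unfold bot. apply sup_least. intros y []. Qed.

Lemma le_top (Q : quantale) (x : Q) : le x top.
Proof. unfold top. apply (sup_ub Q (fun _ => True)). exact I. Qed.

Lemma sup2 (Q : quantale) (a b : Q) : le a b -> sup (fun x => x = a \/ x = b) = b.
Proof.
  intro H. apply le_antisym.
  - apply sup_least. intros x [->| ->]; [exact H | apply le_refl].
  - apply (sup_ub Q (fun x => x = a \/ x = b)). right; reflexivity.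
Qed.

Lemma mono_l (Q : quantale) (a b c : Q) : le a b -> le (mul a c) (mul b c).
Proof.
  intro H. rewrite <- (sup2 Q a b H). rewrite mul_supl.
  apply (sup_ub Q (fun z => exists x, (x = a \/ x = b) /\ z = mul x c)).
  exists a. split; [left; reflexivity | reflexivity].
Qed.

Lemma mono_r (Q : quantale) (a b c : Q) : le a b -> le (mul c a) (mul c b).
Proof.
  intro H. rewrite <- (sup2 Q a b H). rewrite mul_supr.
  apply (sup_ub Q (fun z => exists x, (x = a \/ x = b) /\ z = mul c x)).
  exists a. split; [left; reflexivity | reflexivity].
Qed.

Lemma mul_bot_l (Q : quantale) (x : Q) : mul bot x = bot.
Proof.
  apply le_antisym; [|apply le_bot].
  unfold bot at 1. rewrite mul_supl. apply sup_least. intros z [y [[] _]].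
Qed.

Lemma mul_bot_r (Q : quantale) (x : Q) : mul x bot = bot.
Proof.
  apply le_antisym; [|apply le_bot].
  unfold bot at 1. rewrite mul_supr. apply sup_least. intros z [y [[] _]].
Qed.

Lemma rimpl_le (Q : quantale) (r p : Q) : le (mul (rimpl r p) p) r.
Proof.
  unfold rimpl. rewrite mul_supl. apply sup_least. intros z [x [H ->]]. exact H.
Qed.

Lemma limpl_le (Q : quantale) (p r : Q) : le (mul p (limpl p r)) r.
Proof.
  unfold limpl. rewrite mul_supr. apply sup_least. intros z [x [H ->]]. exact H.
Qed.

Lemma rimpl_ge (Q : quantale) (x r p : Q) : le (mul x p) r -> le x (rimpl r p).
Proof. intro H. unfold rimpl. apply (sup_ub Q (fun y => le (mul y p) r)). exact H. Qed.

Lemma limpl_ge (Q : quantale) (x r p : Q) : le (mul p x) r -> le x (limpl p r).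
Proof. intro H. unfold limpl. apply (sup_ub Q (fun y => le (mul p y) r)). exact H. Qed.

Lemma DQ_intro (Q : quantale) (p q u : Q) :
  le u (mul (rimpl u p) p) -> le u (mul q (limpl q u)) -> DQ p q u.
Proof.
  intros H1 H2. split; apply le_antisym; auto using rimpl_le, limpl_le.
Qed.

Lemma meet_l (Q : quantale) (p q : Q) : le (meet p q) p.
Proof. unfold meet. apply sup_least. intros x [H _]. exact H. Qed.
Lemma meet_r (Q : quantale) (p q : Q) : le (meet p q) q.
Proof. unfold meet. apply sup_least. intros x [_ H]. exact H. Qed.
Lemma meet_glb (Q : quantale) (u p q : Q) : le u p -> le u q -> le u (meet p q).
Proof. intros H1 H2. unfold meet. apply (sup_ub Q (fun u => le u p /\ le u q)). auto. Qed.

Lemma DQ_self (Q : quantale) (q : Q) : DQ q q q.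
Proof.
  apply DQ_intro.
  - eapply le_trans; [|apply mono_l; apply (rimpl_ge Q unit)].
    + rewrite mul1q. apply le_refl.
    + rewrite mul1q. apply le_refl.
  - eapply le_trans; [|apply mono_r; apply (limpl_ge Q unit)].
    + rewrite mulq1. apply le_refl.
    + rewrite mulq1. apply le_refl.
Qed.

Lemma integral_DQ (Q : quantale) : integral Q ->
  forall (p' q' u : Q), DQ p' q' u -> le u (meet p' q').
Proof.
  intros HI p' q' u [H1 H2]. apply meet_glb.
  - rewrite <- H1. eapply le_trans; [apply mono_l; apply (le_top Q (rimpl u p'))|].
    rewrite <- HI, mul1q. apply le_refl.
  - rewrite <- H2. eapply le_trans; [apply mono_r; apply (le_top Q (limpl q' u))|].
    rewrite <- HI, mulq1. apply le_refl.
Qed.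

Theorem lemma2p1 (Q : quantale) (HQ : nontrivial Q) (p q : Q) :
  (* (1) *)
  ((forall u : Q, DQ bot q u <-> u = bot) /\
   (forall u : Q, DQ q bot u <-> u = bot)) /\
  (* (2) *)
  (forall u : Q, DQ (unit : Q) unit u) /\
  (* (3) *)
  DQ q q q /\
  (* (4) *)
  DQ p q bot /\
  (* (5) *)
  (DQ (top : Q) top unit <-> integral Q) /\
  (* (6) *)
  (integral Q <-> forall (p' q' u : Q), DQ p' q' u -> le u (meet p' q')) /\
  (* (7) *)
  (divisible Q <-> forall (p' q' u : Q), DQ p' q' u <-> le u (meet p' q')).
Proof.
  split; [split|split; [|split; [|split; [|split; [|split]]]]].
  - intro u. split.
    + intros [H _]. rewrite mul_bot_r in H. auto.
    + intros ->. apply DQ_intro; apply le_bot.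
  - intro u. split.
    + intros [_ H]. rewrite mul_bot_l in H. auto.
    + intros ->. apply DQ_intro; apply le_bot.
  - intro u. apply DQ_intro.
    + rewrite mulq1. apply rimpl_ge. rewrite mulq1. apply le_refl.
    + rewrite mul1q. apply limpl_ge. rewrite mul1q. apply le_refl.
  - apply DQ_self.
  - apply DQ_intro; apply le_bot.
  - split.
    + intros [H _]. unfold integral. apply le_antisym; [apply le_top|].
      set (x := rimpl unit top) in *.
      rewrite <- (mul1q Q top) at 1. rewrite <- H at 1.
      rewrite <- mulA. rewrite <- H. apply mono_r. apply le_top.
    + intro HI. unfold integral in HI. rewrite HI. apply DQ_self.
  - split.
    + apply integral_DQ.
    + intro H. unfold integral. apply le_antisym; [apply le_top|].
      eapply le_trans; [|apply meet_l].
      apply H. apply DQ_intro.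
      * rewrite mulq1. apply rimpl_ge. rewrite mulq1. apply le_refl.
      * rewrite mul1q. apply limpl_ge. rewrite mul1q. apply le_refl.
  - split.
    + intros HD.
      assert (HI : integral Q).
      { unfold integral. apply le_antisym; [apply le_top|].
        destruct (HD unit top (le_top Q unit)) as [H _]. set (y := limpl top unit) in *.
        rewrite <- (mulq1 Q top) at 1. rewrite <- H at 1.
        rewrite mulA. rewrite <- H. apply mono_l. apply le_top. }
      intros p' q' u. split.
      * apply integral_DQ; exact HI.
      * intro Hu. split.
        -- apply (HD u p'). eapply le_trans; [exact Hu|apply meet_l].
        -- apply (HD u q'). eapply le_trans; [exact Hu|apply meet_r].
    + intros H u q' Hu.
      assert (D : DQ q' q' u) by (apply H; apply meet_glb; exact Hu).
      destruct D as [D1 D2]. split; assumption.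
Qed.
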